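(* Let $\mathbb{D}\subset\mathbb{C}$ be the unit disc and $\mathbb{B}^n\subset\mathbb{R}^n$ ($n\ge 3$) the open unit ball with boundary sphere $S^{n-1}$. Assume $F:\mathbb{D}\to\mathbb{B}^n$ is a conformal minimal immersion with $F(0)=0$, and that for some $z_0$ with $|z_0|=1$, $F$ extends to $z_0$ with $F(z_0)\in S^{n-1}$. If the differential $dF(z_0)$ exists, then $\|dF(z_0)\|\ge 1$.
   Context: A conformal minimal immersion $F=F(x,y)$, $z=x+iy$, is a harmonic immersion with $\langle F_x,F_x\rangle=\langle F_y,F_y\rangle$ and $\langle F_x,F_y\rangle=0$. For such a map $\|dF\|$ equals the common length $|F_x|=|F_y|$. *)

(* Defs.v *)
From Stdlib Require Import Reals.
From Coquelicot Require Import Coquelicot.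
Open Scope R_scope.

(* A point z = x + i y of C is represented by the pair of reals (x, y).
   A map into R^n is represented by  F : R -> R -> (nat -> R),
   only components i < n being relevant. *)

Fixpoint sqnorm (n : nat) (v : nat -> R) : R :=
  match n with O => 0 | S k => sqnorm k v + v k * v k end.
Fixpoint inner (n : nat) (v w : nat -> R) : R :=
  match n with O => 0 | S k => inner k v w + v k * w k end.

Definition in_disc (x y : R) : Prop := x * x + y * y < 1.

Definition dx (f : R -> R -> R) (x y : R) : R := Derive (fun t => f t y) x.
Definition dy (f : R -> R -> R) (x y : R) : R := Derive (fun t => f x t) y.

Definition jcont (g : R -> R -> R) (x y : R) : Prop :=
  continuous (fun p : R * R => g (fst p) (snd p)) (x, y).

Definition C2_at (f : R -> R -> R) (x y : R) : Prop :=
  ex_derive (fun t => f t y) x /\ ex_derive (fun t => f x t) y /\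
  ex_derive (fun t => dx f t y) x /\ ex_derive (fun t => dx f x t) y /\
  ex_derive (fun t => dy f t y) x /\ ex_derive (fun t => dy f x t) y /\
  jcont f x y /\ jcont (dx f) x y /\ jcont (dy f) x y /\
  jcont (dx (dx f)) x y /\ jcont (dy (dx f)) x y /\
  jcont (dx (dy f)) x y /\ jcont (dy (dy f)) x y.

Definition comp (F : R -> R -> nat -> R) (i : nat) : R -> R -> R :=
  fun x y => F x y i.

Definition Fx (F : R -> R -> nat -> R) (x y : R) : nat -> R :=
  fun i => dx (comp F i) x y.
Definition Fy (F : R -> R -> nat -> R) (x y : R) : nat -> R :=
  fun i => dy (comp F i) x y.

Definition harmonic_on_disc (n : nat) (F : R -> R -> nat -> R) : Prop :=
  forall x y, in_disc x y -> forall i, (i < n)%nat ->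
    C2_at (comp F i) x y /\
    dx (dx (comp F i)) x y + dy (dy (comp F i)) x y = 0.

Definition immersion_on_disc (n : nat) (F : R -> R -> nat -> R) : Prop :=
  forall x y, in_disc x y -> forall a b : R,
    (forall i, (i < n)%nat -> a * Fx F x y i + b * Fy F x y i = 0) ->
    a = 0 /\ b = 0.

Definition conformal_on_disc (n : nat) (F : R -> R -> nat -> R) : Prop :=
  forall x y, in_disc x y ->
    inner n (Fx F x y) (Fx F x y) = inner n (Fy F x y) (Fy F x y) /\
    inner n (Fx F x y) (Fy F x y) = 0.

Definition conformal_minimal_immersion (n : nat) (F : R -> R -> nat -> R) : Prop :=
  harmonic_on_disc n F /\ immersion_on_disc n F /\ conformal_on_disc n F.

Definition maps_disc_into_ball (n : nat) (F : R -> R -> nat -> R) : Prop :=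
  forall x y, in_disc x y -> sqnorm n (F x y) < 1.

Definition in_dom (x0 y0 x y : R) : Prop := in_disc x y \/ (x = x0 /\ y = y0).

Definition extends_to (n : nat) (F : R -> R -> nat -> R) (x0 y0 : R) : Prop :=
  forall eps, 0 < eps -> exists delta, 0 < delta /\
    forall x y, in_dom x0 y0 x y ->
      (x - x0) * (x - x0) + (y - y0) * (y - y0) < delta * delta ->
      sqnorm n (fun i => F x y i - F x0 y0 i) < eps * eps.

(* The linear map L : R^2 -> R^n, L(u,v) = u a + v b (columns a, b), is the
   differential of F (restricted to D ∪ {z0}) at z0 = (x0,y0). *)
Definition is_differential_at (n : nat) (F : R -> R -> nat -> R) (x0 y0 : R)
    (a b : nat -> R) : Prop :=
  forall eps, 0 < eps -> exists delta, 0 < delta /\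
    forall x y, in_dom x0 y0 x y ->
      (x - x0) * (x - x0) + (y - y0) * (y - y0) < delta * delta ->
      sqrt (sqnorm n (fun i => F x y i - F x0 y0 i
                                - ((x - x0) * a i + (y - y0) * b i)))
      <= eps * sqrt ((x - x0) * (x - x0) + (y - y0) * (y - y0)).

Definition opnorm (n : nat) (a b : nat -> R) : Rbar :=
  Lub_Rbar (fun r => exists u v : R, u * u + v * v = 1 /\
              r = sqrt (sqnorm n (fun i => u * a i + v * b i))).

(* Main.v *)
Require Import Defs.
From Stdlib Require Import Reals Lra Psatz.
From Coquelicot Require Import Coquelicot.
Open Scope R_scope.

Lemma sqnorm_ge0 n v : 0 <= sqnorm n v.
Proof. induction n; simpl; nra. Qed.

Lemma sqnorm_inner n v : sqnorm n v = inner n v v.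
Proof. induction n; simpl; auto. rewrite IHn; ring. Qed.

Lemma inner_sym n u v : inner n u v = inner n v u.
Proof. induction n; simpl; auto. rewrite IHn; ring. Qed.

Lemma inner_ext n u v u' v' : (forall i, (i < n)%nat -> u i = u' i /\ v i = v' i) ->
  inner n u v = inner n u' v'.
Proof.
  induction n; simpl; intros H; auto.
  destruct (H n) as [h1 h2]; [lia|]. rewrite h1, h2, IHn; auto; intros i Hi; apply H; lia.
Qed.

Lemma sqnorm_ext n u u' : (forall i, (i < n)%nat -> u i = u' i) -> sqnorm n u = sqnorm n u'.
Proof.
  intros H; rewrite !sqnorm_inner; apply inner_ext; intros i Hi; rewrite H; auto.
Qed.

Lemma inner_addr n u v w : inner n u (fun i => v i + w i) = inner n u v + inner n u w.
Proof. induction n; simpl; [ring|]. rewrite IHn; ring. Qed.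

Lemma sqnorm3 n x y a X Y F :
  sqnorm n (fun i => x * X i + y * Y i - a * F i) =
  x*x*inner n X X + y*y*inner n Y Y + a*a*inner n F F + 2*x*y*inner n X Y
  - 2*a*x*inner n F X - 2*a*y*inner n F Y.
Proof. induction n; simpl; [ring|]. rewrite IHn; ring. Qed.

Lemma sqnorm2 n u v a :
  sqnorm n (fun i => u i + a * v i) = sqnorm n u + 2 * a * inner n u v + a * a * sqnorm n v.
Proof. induction n; simpl; [ring|]. rewrite IHn; ring. Qed.

Lemma cauchy_schwarz n u v : inner n u v * inner n u v <= sqnorm n u * sqnorm n v.
Proof.
  destruct (Req_dec (sqnorm n v) 0) as [H0|H0].
  -
    assert (Hq : forall a, 0 <= sqnorm n u + 2 * a * inner n u v).
    { intros a. pose proof (sqnorm_ge0 n (fun i => u i + a * v i)) as Hs.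
      rewrite sqnorm2, H0 in Hs. lra. }
    destruct (Req_dec (inner n u v) 0) as [Hi|Hi].
    + rewrite Hi, H0; nra.
    + exfalso. specialize (Hq (- (sqnorm n u + 1) / (2 * inner n u v))).
      assert (2 * (- (sqnorm n u + 1) / (2 * inner n u v)) * inner n u v = - (sqnorm n u + 1)).
      { field; auto. }
      lra.
  - pose proof (sqnorm_ge0 n v) as Hv.
    pose proof (sqnorm_ge0 n (fun i => u i + (- inner n u v / sqnorm n v) * v i)) as Hs.
    rewrite sqnorm2 in Hs.
    assert (Hv' : 0 < sqnorm n v) by lra.
    assert (E : sqnorm n u + 2 * (- inner n u v / sqnorm n v) * inner n u v +
      - inner n u v / sqnorm n v * (- inner n u v / sqnorm n v) * sqnorm n v
      = (sqnorm n u * sqnorm n v - inner n u v * inner n u v) / sqnorm n v).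
    { field; lra. }
    rewrite E in Hs.
    apply Rmult_le_compat_r with (r := sqnorm n v) in Hs; [|lra].
    unfold Rdiv in Hs. rewrite Rmult_assoc, Rinv_l, Rmult_0_l, Rmult_1_r in Hs; lra.
Qed.

Definition nrm n v := sqrt (sqnorm n v).

Lemma nrm_triangle n u v : nrm n (fun i => u i + v i) <= nrm n u + nrm n v.
Proof.
  unfold nrm.
  pose proof (sqnorm_ge0 n u). pose proof (sqnorm_ge0 n v).
  apply Rsqr_incr_0_var.
  2: { pose proof (sqrt_pos (sqnorm n u)); pose proof (sqrt_pos (sqnorm n v)); lra. }
  unfold Rsqr. rewrite sqrt_sqrt by apply sqnorm_ge0.
  replace (sqnorm n (fun i => u i + v i)) with (sqnorm n (fun i => u i + 1 * v i))
    by (apply sqnorm_ext; intros; ring).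
  rewrite sqnorm2.
  pose proof (cauchy_schwarz n u v).
  assert (inner n u v <= sqrt (sqnorm n u) * sqrt (sqnorm n v)).
  { rewrite <- sqrt_mult by auto.
    destruct (Rle_dec (inner n u v) 0); [pose proof (sqrt_pos (sqnorm n u * sqnorm n v)); lra|].
    rewrite <- (sqrt_Rsqr (inner n u v)) by lra. apply sqrt_le_1_alt. unfold Rsqr; lra. }
  assert (sqrt (sqnorm n u) * sqrt (sqnorm n u) = sqnorm n u) by (apply sqrt_sqrt; auto).
  assert (sqrt (sqnorm n v) * sqrt (sqnorm n v) = sqnorm n v) by (apply sqrt_sqrt; auto).
  nra.
Qed.

Lemma max_second (phi phi1 : R -> R) (t0 d L : R) : 0 < d ->
  (forall u, Rabs (u - t0) < d -> derivable_pt_lim phi u (phi1 u)) ->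
  derivable_pt_lim phi1 t0 L ->
  (forall u, Rabs (u - t0) < d -> phi u <= phi t0) -> L <= 0.
Proof.
  intros Hd Hphi Hphi1 Hmax.
  assert (H0 : phi1 t0 = 0).
  { assert (Hd0 : Rabs (t0 - t0) < d) by (rewrite Rminus_diag, Rabs_R0; auto).
    pose (pr := exist (fun l => derivable_pt_lim phi t0 l) (phi1 t0) (Hphi t0 Hd0)
                : derivable_pt phi t0).
    change (phi1 t0) with (derive_pt phi t0 pr).
    apply (deriv_maximum phi (t0 - d) (t0 + d) t0 pr); try lra.
    intros x H1 H2; apply Hmax. apply Rabs_def1; lra. }
  destruct (Rle_dec L 0) as [HL|HL]; auto. exfalso.
  assert (HL' : 0 < L) by lra.
  destruct (Hphi1 (L/2) ltac:(lra)) as [[del Hdel] Hx].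
  set (h := Rmin del d / 2).
  assert (Hh : 0 < h /\ h < del /\ h < d).
  { unfold h. pose proof (Rmin_l del d); pose proof (Rmin_r del d).
    assert (0 < Rmin del d) by (apply Rmin_pos; auto). lra. }
  destruct (MVT_cor2 phi phi1 t0 (t0 + h)) as [c [Hc1 Hc2]]; try lra.
  { intros c Hc. apply Hphi. apply Rabs_def1; lra. }
  assert (Hpos : 0 < phi1 c).
  { specialize (Hx (c - t0)). replace (t0 + (c - t0)) with c in Hx by ring.
    rewrite H0 in Hx. assert (c - t0 <> 0) by lra.
    assert (Rabs (c - t0) < del) by (apply Rabs_def1; lra).
    specialize (Hx H H1).
    apply Rabs_def2 in Hx. destruct Hx as [_ Hx].
    assert (0 < (phi1 c - 0) / (c - t0)) by lra.
    unfold Rdiv in H2. rewrite Rminus_0_r in H2.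
    assert (0 < / (c - t0)) by (apply Rinv_0_lt_compat; lra).
    nra. }
  assert (Habs : Rabs (t0 + h - t0) < d) by (apply Rabs_def1; lra).
  specialize (Hmax _ Habs). nra.
Qed.


Lemma dpl_inner k (f g : R -> nat -> R) (df dg : nat -> R) t :
  (forall i, (i < k)%nat -> derivable_pt_lim (fun s => f s i) t (df i)) ->
  (forall i, (i < k)%nat -> derivable_pt_lim (fun s => g s i) t (dg i)) ->
  derivable_pt_lim (fun s => inner k (f s) (g s)) t (inner k df (g t) + inner k (f t) dg).
Proof.
  induction k; intros Hf Hg; simpl.
  - replace (0 + 0) with 0 by ring. apply derivable_pt_lim_const.
  - assert (H1 := IHk (fun i Hi => Hf i ltac:(lia)) (fun i Hi => Hg i ltac:(lia))).
    assert (H2 := derivable_pt_lim_mult _ _ _ _ _ (Hf k ltac:(lia)) (Hg k ltac:(lia))).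
    assert (H3 := derivable_pt_lim_plus _ _ _ _ _ H1 H2).
    unfold plus_fct, mult_fct in H3.
    replace (inner k df (g t) + df k * g t k + (inner k (f t) dg + f t k * dg k))
      with (inner k df (g t) + inner k (f t) dg + (df k * g t k + f t k * dg k)) by ring.
    exact H3.
Qed.

Lemma dpl_sqnorm k (f : R -> nat -> R) (df : nat -> R) t :
  (forall i, (i < k)%nat -> derivable_pt_lim (fun s => f s i) t (df i)) ->
  derivable_pt_lim (fun s => sqnorm k (f s)) t (2 * inner k (f t) df).
Proof.
  intros Hf.
  assert (H := dpl_inner k f f df df t Hf Hf).
  rewrite inner_sym in H.
  replace (2 * inner k (f t) df) with (inner k (f t) df + inner k (f t) df) by ring.
  eapply derivable_pt_lim_ext; [| exact H]. intros z; simpl. rewrite sqnorm_inner; auto.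
Qed.


Definition hf (a k s : R) : R := exp (- a * ln (s * s + k)).

Lemma dh a k s : 0 < s*s+k ->
  derivable_pt_lim (fun u => hf a k u) s (hf a k s * (-2*a*s/(s*s+k))).
Proof.
  intros H; apply is_derive_Reals; unfold hf. auto_derive.
  - lra.
  - field; lra.
Qed.

Lemma dhs a k s : 0 < s*s+k ->
  derivable_pt_lim (fun u => hf a k u * (-2*a*u/(u*u+k))) s
   (hf a k s * (-2*a*s/(s*s+k)) * (-2*a*s/(s*s+k))
    + hf a k s * (-2*a) * ((s*s+k) - 2*s*s)/((s*s+k)*(s*s+k))).
Proof.
  intros H; apply is_derive_Reals; unfold hf. auto_derive.
  - lra.
  - field; lra.
Qed.

Lemma dpl_eq f x l l' : derivable_pt_lim f x l -> l = l' -> derivable_pt_lim f x l'.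
Proof. intros H ->; auto. Qed.

Definition lineL (n : nat) (a eta k t : R) (G0 G10 G2 : nat -> R) : R :=
  let r := t*t+k in
  let h := hf a k t in
  let hs := h * (-2*a*t/r) in
  let hss := hs * (-2*a*t/r) + h * (-2*a) * (r - 2*t*t)/(r*r) in
  hss * sqnorm n G0 + hs * (2 * (2 * inner n G0 G10))
  + h * (2 * (inner n G10 G10 + inner n G0 G2)) + 2 * eta.

Lemma line_second n (a eta k t0 d : R) (G G1 : R -> nat -> R) (G2 : nat -> R) :
  0 < d -> (forall s, Rabs (s - t0) < d -> 0 < s*s+k) ->
  (forall s, Rabs (s - t0) < d -> forall i, (i < n)%nat ->
      derivable_pt_lim (fun u => G u i) s (G1 s i)) ->
  (forall i, (i < n)%nat -> derivable_pt_lim (fun u => G1 u i) t0 (G2 i)) ->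
  (forall s, Rabs (s - t0) < d ->
     hf a k s * sqnorm n (G s) + eta * (s*s+k) <=
     hf a k t0 * sqnorm n (G t0) + eta * (t0*t0+k)) ->
  lineL n a eta k t0 (G t0) (G1 t0) G2 <= 0.
Proof.
  intros Hd Hk HG HG1 Hmax.
  pose (phi := fun s => hf a k s * sqnorm n (G s) + eta * (s*s+k)).
  pose (phi1 := fun s => hf a k s * (-2*a*s/(s*s+k)) * sqnorm n (G s)
                       + hf a k s * (2 * inner n (G s) (G1 s)) + eta * (2 * s)).
  assert (Ht0 : Rabs (t0 - t0) < d) by (rewrite Rminus_diag, Rabs_R0; auto).
  apply (max_second phi phi1 t0 d); auto.
  - intros s Hs. unfold phi, phi1.
    apply derivable_pt_lim_plus.
    + apply derivable_pt_lim_mult.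
      * apply dh; auto.
      * apply dpl_sqnorm. apply HG; auto.
    + apply is_derive_Reals; auto_derive; auto; ring.
  - unfold phi1, lineL. cbv zeta.
    assert (Hr := Hk t0 Ht0).
    assert (HI := dpl_inner n G G1 (G1 t0) G2 t0 (HG t0 Ht0) HG1).
    assert (HS := dpl_sqnorm n G (G1 t0) t0 (HG t0 Ht0)).
    assert (E1 := derivable_pt_lim_mult _ _ _ _ _ (dhs a k t0 Hr) HS).
    assert (E2 := derivable_pt_lim_mult _ _ _ _ _ (dh a k t0 Hr)
                   (derivable_pt_lim_scal _ 2 _ _ HI)).
    assert (E3' : derivable_pt_lim (fun s => eta * (2 * s)) t0 (2 * eta)).
    { apply is_derive_Reals; auto_derive; auto; ring. }
    assert (E := derivable_pt_lim_plus _ _ _ _ _ (derivable_pt_lim_plus _ _ _ _ _ E1 E2) E3').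
    unfold plus_fct, mult_fct, mult_real_fct in E.
    eapply dpl_eq; [exact E | ring].
Qed.


Lemma hf_pos a k s : 0 < hf a k s.
Proof. unfold hf; apply exp_pos. Qed.

Lemma lineL_sum n a eta x y (F0 X Y Fxx Fyy : nat -> R) :
  0 < a -> 0 < eta -> 0 < x*x+y*y ->
  inner n X X = inner n Y Y -> inner n X Y = 0 ->
  inner n F0 Fxx + inner n F0 Fyy = 0 ->
  0 < lineL n a eta (y*y) x F0 X Fxx + lineL n a eta (x*x) y F0 Y Fyy.
Proof.
  intros Ha He Hr HXY HXY0 Hharm.
  assert (Hh : hf a (x*x) y = hf a (y*y) x).
  { unfold hf. f_equal. f_equal. f_equal. ring. }
  unfold lineL; cbv zeta. rewrite Hh.
  replace (y*y + x*x) with (x*x+y*y) by ring.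
  pose proof (hf_pos a (y*y) x) as Hp.
  set (h := hf a (y*y) x) in *.
  set (r := x*x+y*y) in *.
  pose proof (sqnorm_ge0 n (fun i => x * X i + y * Y i - a * F0 i)) as HQ.
  rewrite sqnorm3 in HQ.

  rewrite sqnorm_inner.
  set (Q := x * x * inner n X X + y * y * inner n Y Y + a * a * inner n F0 F0 +
         2 * x * y * inner n X Y - 2 * a * x * inner n F0 X - 2 * a * y * inner n F0 Y) in *.
  assert (E : forall A B C D : R, A = B -> B = C -> C = D -> A = D) by (intros; subst; auto).
  match goal with |- 0 < ?T => assert (ET : T = 4 * (h / r) * Q + 4 * eta) end.
  { unfold Q. rewrite HXY0. rewrite <- HXY.
    replace (inner n F0 Fyy) with (- inner n F0 Fxx) by lra.
    unfold r. field. fold r. lra. }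
  rewrite ET.
  assert (0 < h / r) by (apply Rdiv_lt_0_compat; auto).
  nra.
Qed.

Lemma near_pt px py s d : px*px+py*py < 1 -> Rabs (s - px) < d -> d <= 1 ->
  Rabs (s*s+py*py - (px*px+py*py)) <= 3*d.
Proof.
  intros H1 H2 H3.
  replace (s*s+py*py - (px*px+py*py)) with ((s-px)*(s+px)) by ring.
  rewrite Rabs_mult.
  assert (Rabs px <= 1).
  { destruct (Rle_dec (Rabs px) 1); auto. exfalso.
    assert (1 < Rabs px) by lra. assert (Rabs px * Rabs px = px*px) by (rewrite <- Rabs_mult; apply Rabs_right; nra). nra. }
  assert (Rabs (s+px) <= 3).
  { replace (s+px) with ((s-px) + 2*px) by ring.
    eapply Rle_trans; [apply Rabs_triang|]. rewrite Rabs_mult, (Rabs_right 2) by lra. lra. }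
  pose proof (Rabs_pos (s-px)); pose proof (Rabs_pos (s+px)). nra.
Qed.

Definition Phi n (F : R -> R -> nat -> R) a eta x y :=
  hf a (y*y) x * sqnorm n (F x y) + eta * (x*x+y*y).

Lemma hf_sym a x y : hf a (y*y) x = hf a (x*x) y.
Proof. unfold hf. f_equal. f_equal. f_equal. ring. Qed.

Lemma dpl_of_ex f x : ex_derive f x -> derivable_pt_lim f x (Derive f x).
Proof. intros H; apply is_derive_Reals; apply Derive_correct; auto. Qed.

Lemma no_interior_max n F a eta px py d :
  harmonic_on_disc n F -> conformal_on_disc n F -> 0 < a -> 0 < eta ->
  in_disc px py -> 0 < px*px+py*py -> 0 < d ->
  (forall s, Rabs (s - px) < d -> Phi n F a eta s py <= Phi n F a eta px py) ->
  (forall s, Rabs (s - py) < d -> Phi n F a eta px s <= Phi n F a eta px py) -> False.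
Proof.
  intros Hh Hc Ha He Hd Hr Hdp Mx My.
  unfold in_disc in Hd.
  set (r0 := px*px+py*py) in *.
  set (d' := Rmin d (Rmin 1 (Rmin ((1-r0)/4) (r0/4)))).
  assert (Hd'1 : d' <= d) by apply Rmin_l.
  assert (Hd'2 : d' <= 1) by (eapply Rle_trans; [apply Rmin_r| apply Rmin_l]).
  assert (Hd'3 : d' <= (1-r0)/4).
  { eapply Rle_trans; [apply Rmin_r|]. eapply Rle_trans; [apply Rmin_r| apply Rmin_l]. }
  assert (Hd'4 : d' <= r0/4).
  { eapply Rle_trans; [apply Rmin_r|]. eapply Rle_trans; [apply Rmin_r| apply Rmin_r]. }
  assert (Hd'0 : 0 < d').
  { unfold d'. repeat apply Rmin_pos; lra. }
  assert (Nx : forall s, Rabs (s - px) < d' -> in_disc s py /\ 0 < s*s+py*py).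
  { intros s Hs. pose proof (near_pt px py s d' Hd Hs Hd'2) as N.
    fold r0 in N. apply Rabs_le_between in N. unfold in_disc. split; lra. }
  assert (Ny : forall s, Rabs (s - py) < d' -> in_disc px s /\ 0 < s*s+px*px).
  { intros s Hs. assert (Hd2 : py*py+px*px < 1) by (unfold r0 in Hd; lra).
    pose proof (near_pt py px s d' Hd2 Hs Hd'2) as N.
    replace (py*py+px*px) with r0 in N by (unfold r0; ring).
    apply Rabs_le_between in N. unfold in_disc. split; lra. }
  assert (Hdisc : in_disc px py) by (unfold in_disc; fold r0; lra).
  destruct (Hc px py Hdisc) as [C1 C2].
  assert (Lx := line_second n a eta (py*py) px d' (fun s => F s py) (fun s => Fx F s py)
             (fun i => dx (dx (Defs.comp F i)) px py) Hd'0).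
  assert (Ly := line_second n a eta (px*px) py d' (fun s => F px s) (fun s => Fy F px s)
             (fun i => dy (dy (Defs.comp F i)) px py) Hd'0).
  assert (Lx' : lineL n a eta (py*py) px (F px py) (Fx F px py) (fun i => dx (dx (Defs.comp F i)) px py) <= 0).
  { apply Lx.
    - intros s Hs; apply Nx; auto.
    - intros s Hs i Hi. destruct (Nx s Hs) as [Hds _].
      destruct (Hh s py Hds i Hi) as [[D1 _] _].
      apply (dpl_of_ex (fun t => Defs.comp F i t py) s D1).
    - intros i Hi. destruct (Hh px py Hdisc i Hi) as [[_ [_ [D3 _]]] _].
      apply (dpl_of_ex (fun t => dx (Defs.comp F i) t py) px D3).
    - intros s Hs. apply Mx. lra. }
  assert (Ly' : lineL n a eta (px*px) py (F px py) (Fy F px py) (fun i => dy (dy (Defs.comp F i)) px py) <= 0).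
  { apply Ly.
    - intros s Hs; apply Ny; auto.
    - intros s Hs i Hi. destruct (Ny s Hs) as [Hds _].
      destruct (Hh px s Hds i Hi) as [[_ [D2 _]] _].
      apply (dpl_of_ex (fun t => Defs.comp F i px t) s D2).
    - intros i Hi. destruct (Hh px py Hdisc i Hi) as [[_ [_ [_ [_ [_ [D6 _]]]]]] _].
      apply (dpl_of_ex (fun t => dy (Defs.comp F i) px t) py D6).
    - intros s Hs. assert (M := My s ltac:(lra)). unfold Phi in M.
      rewrite (hf_sym a px s), (hf_sym a px py) in M.
      replace (s*s+px*px) with (px*px+s*s) by ring.
      replace (py*py+px*px) with (px*px+py*py) by ring. exact M. }
  assert (S := lineL_sum n a eta px py (F px py) (Fx F px py) (Fy F px py)
     (fun i => dx (dx (Defs.comp F i)) px py) (fun i => dy (dy (Defs.comp F i)) px py) Ha He Hr C1 C2).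
  assert (Hz : inner n (F px py) (fun i => dx (dx (Defs.comp F i)) px py) +
               inner n (F px py) (fun i => dy (dy (Defs.comp F i)) px py) = 0).
  { rewrite <- inner_addr. transitivity (inner n (F px py) (fun _ => 0)).
    - apply inner_ext. intros i Hi. split; auto. apply (Hh px py Hdisc i Hi).
    - clear. induction n; simpl; [ring| rewrite IHn; ring]. }
  specialize (S Hz). lra.
Qed.


Definition ctsED (g : R -> R -> R) (x y : R) : Prop :=
  forall eps, 0 < eps -> exists del, 0 < del /\ forall x' y',
    Rabs (x' - x) < del -> Rabs (y' - y) < del -> Rabs (g x' y' - g x y) < eps.

Definition ann (d1 d2 x y : R) : Prop := d1 <= x*x+y*y /\ x*x+y*y <= d2.
Definition evt_stmt (g : R -> R -> R) (d1 d2 : R) : Prop :=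
  exists cx cy, ann d1 d2 cx cy /\ forall x y, ann d1 d2 x y -> g x y <= g cx cy.
Definition rho2 (x y : R) : R := x*x+y*y.

Module EVTm.
From HB Require Import structures.
From mathcomp Require Import all_boot all_order all_algebra.
From mathcomp Require Import all_classical all_reals.
From mathcomp Require Import topology normedtype derive.
From mathcomp Require Import Rstruct Rstruct_topology.
Import Order.TTheory GRing.Theory Num.Theory.
Import numFieldNormedType.Exports.
Local Open Scope classical_set_scope.
Local Open Scope ring_scope.

Lemma bridge (g : R -> R -> R) (x y : R) : ctsED g x y ->
  {for (x, y), continuous (fun p : R * R => g p.1 p.2)}.
Proof.
move=> H; rewrite /prop_for /continuous_at.
have [_ P] := @cvgrPdist_lt R R^o _ (nbhs (x,y)) _ (fun p : R * R => g p.1 p.2) (g x y).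
apply: P => e /RltP e0.
have [d [/RltP d0 Hd]] := H e e0.
apply/nbhs_ballP; exists d => //= [[x' y']] [/= b1 b2].
move: b1 b2; rewrite /ball /= => b1 b2.
rewrite distrC -RabsE; apply/RltP; apply: Hd; apply/RltP; rewrite RabsE distrC //.
Qed.

Lemma evt_annulus (g : R -> R -> R) (d1 d2 : R) :
  Rlt 0 d1 -> Rle d1 d2 ->
  (forall x y, ctsED rho2 x y) ->
  (forall x y, ann d1 d2 x y -> ctsED g x y) -> evt_stmt g d1 d2.
Proof.
move=> d1p d12 rc gc; rewrite /evt_stmt /ann.
pose rho := fun p : R * R => Rplus (Rmult p.1 p.1) (Rmult p.2 p.2).
pose K := rho @^-1` [set r | d1 <= r] `&` rho @^-1` [set r | r <= d2].
have rcont : continuous rho.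
 move=> [x y]; exact: (bridge _ _ _ (rc x y)).
have Kcl : closed K.
  apply: closedI.
    apply: (@preimage_closed _ R rho); [by move=> p _; exact: (rcont p)| exact: closed_ge].
  apply: (@preimage_closed _ R rho); [by move=> p _; exact: (rcont p)| exact: closed_le].
pose M := Rplus d2 1.
have Kc : compact K.
  apply: (@subclosed_compact _ K (`[(- M)%R, M]%classic `*` `[(- M)%R, M]%classic)) => //.
    by apply: compact_setX; apply: segment_compact.
  move=> [x y] [/= /RleP h1 /RleP h2]; rewrite /rho /= in h1 h2.
  have hx : Rle (- M) x /\ Rle x M.
    rewrite /M; split; apply: Rnot_lt_le => hh; nra.
  have hy : Rle (- M) y /\ Rle y M.
    rewrite /M; split; apply: Rnot_lt_le => hh; nra.
  split; rewrite /= in_itv /=; apply/andP; split; apply/RleP; tauto.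
have K0 : K !=set0.
  exists (sqrt d1, 0%R); rewrite /K /rho /=.
  have e : Rplus (Rmult (sqrt d1) (sqrt d1)) (Rmult 0 0) = d1.
    rewrite sqrt_sqrt; [ring | lra].
  by rewrite e; split; apply/RleP; lra.
have gK : {within K, continuous (fun p : R * R => g p.1 p.2)}.
  apply: continuous_in_subspaceT => -[x y]; rewrite inE => -[/= /RleP h1 /RleP h2].
  exact: bridge _ _ _ (gc x y (conj h1 h2)).
have [[cx cy] cK cmax] := compact_EVT_max K0 Kc gK.
exists cx, cy; move: cK; rewrite inE => -[/= /RleP h1 /RleP h2]; split => //.
move=> x y [hx hy]; apply/RleP; apply: (cmax (x, y)); rewrite inE; split; apply/RleP => //.
Qed.
End EVTm.


Lemma cont_ctsED g x y : continuous (fun p : R * R => g (fst p) (snd p)) (x, y) -> ctsED g x y.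
Proof.
  intros H eps He.
  assert (L : locally (g x y) (ball (g x y) eps)) by (exists (mkposreal eps He); auto).
  destruct (H _ L) as [del Hdel].
  exists del; split; [apply cond_pos|].
  intros x' y' H1 H2.
  apply (Hdel (x', y')). split; simpl; auto.
Qed.

Lemma cR_mult (f g : R * R -> R) p : continuous f p -> continuous g p ->
  continuous (fun q => f q * g q) p.
Proof. intros; apply (continuous_mult f g); auto. Qed.
Lemma cR_plus (f g : R * R -> R) p : continuous f p -> continuous g p ->
  continuous (fun q => f q + g q) p.
Proof. intros; apply (continuous_plus f g); auto. Qed.
Lemma cR_const (c : R) (p : R * R) : continuous (fun _ => c) p.
Proof. apply continuous_const. Qed.
Lemma cR_fst (p : R * R) : continuous (fun q : R * R => fst q) p.
Proof. destruct p; apply continuous_fst. Qed.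
Lemma cR_snd (p : R * R) : continuous (fun q : R * R => snd q) p.
Proof. destruct p; apply continuous_snd. Qed.
Lemma cR_comp (f : R * R -> R) (g : R -> R) p : continuous f p -> continuous g (f p) ->
  continuous (fun q => g (f q)) p.
Proof. intros; apply (continuous_comp f g); auto. Qed.

Lemma cont_ln x : 0 < x -> continuous ln x.
Proof.
  intros Hx; apply continuity_pt_filterlim. apply derivable_continuous_pt.
  exists (/x). apply derivable_pt_lim_ln; auto.
Qed.

Lemma cont_sqnorm k (F : R -> R -> nat -> R) p :
  (forall i, (i < k)%nat -> continuous (fun q : R * R => F (fst q) (snd q) i) p) ->
  continuous (fun q : R * R => sqnorm k (F (fst q) (snd q))) p.
Proof.
  induction k; intros H; simpl.
  - apply cR_const.
  - apply cR_plus. apply IHk; intros; apply H; lia.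
    apply cR_mult; apply H; lia.
Qed.

Lemma cont_rho p : continuous (fun q : R * R => fst q * fst q + snd q * snd q) p.
Proof. apply cR_plus; apply cR_mult; (apply cR_fst || apply cR_snd). Qed.

Lemma ctsED_rho x y : ctsED (fun x y => x*x+y*y) x y.
Proof. apply cont_ctsED. apply cont_rho. Qed.

Lemma ctsED_Phi n F a eta x y : harmonic_on_disc n F -> in_disc x y -> 0 < x*x+y*y ->
  ctsED (Phi n F a eta) x y.
Proof.
  intros Hh Hd Hr. apply cont_ctsED. unfold Phi, hf.
  apply cR_plus.
  - apply cR_mult.
    + apply (cR_comp (fun q => - a * ln (fst q * fst q + snd q * snd q)) exp).
      * apply cR_mult; [apply cR_const|].
        apply (cR_comp (fun q => fst q * fst q + snd q * snd q) ln).
        -- apply cont_rho.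
        -- apply cont_ln. simpl. auto.
      * apply continuous_exp.
    + apply cont_sqnorm. intros i Hi.
      destruct (Hh x y Hd i Hi) as [[_ [_ [_ [_ [_ [_ [J _]]]]]]] _]. exact J.
  - apply cR_mult; [apply cR_const| apply cont_rho].
Qed.


Lemma lip1 (g dg : R -> R) a b M :
  (forall c, Rmin a b <= c <= Rmax a b -> derivable_pt_lim g c (dg c)) ->
  (forall c, Rmin a b <= c <= Rmax a b -> Rabs (dg c) <= M) ->
  Rabs (g b - g a) <= M * Rabs (b - a).
Proof.
  intros Hd HM.
  destruct (Rtotal_order a b) as [Hab|[Hab|Hab]].
  - rewrite Rmin_left, Rmax_right in * by lra.
    destruct (MVT_cor2 g dg a b Hab Hd) as [c [Hc1 Hc2]].
    rewrite Hc1, Rabs_mult. apply Rmult_le_compat_r; [apply Rabs_pos|]. apply HM; lra.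
  - subst. rewrite !Rminus_diag, !Rabs_R0. pose proof (HM b ltac:(rewrite Rmin_left, Rmax_left; lra)).
    pose proof (Rabs_pos (dg b)). lra.
  - rewrite Rmin_right, Rmax_left in * by lra.
    destruct (MVT_cor2 g dg b a Hab Hd) as [c [Hc1 Hc2]].
    rewrite <- Rabs_Ropp. replace (- (g b - g a)) with (g a - g b) by ring.
    rewrite <- (Rabs_Ropp (b - a)). replace (- (b - a)) with (a - b) by ring.
    rewrite Hc1, Rabs_mult. apply Rmult_le_compat_r; [apply Rabs_pos|]. apply HM; lra.
Qed.

Lemma bound_dpt (g : R -> R -> R) : jcont g 0 0 ->
  exists M d, 0 < d /\ 0 <= M /\ forall x y, Rabs x < d -> Rabs y < d -> Rabs (g x y) <= M.
Proof.
  intros H. destruct (cont_ctsED g 0 0 H 1 Rlt_0_1) as [d [Hd Hdel]].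
  exists (Rabs (g 0 0) + 1), d. split; auto. split. pose proof (Rabs_pos (g 0 0)); lra.
  intros x y Hx Hy. specialize (Hdel x y). rewrite !Rminus_0_r in Hdel.
  specialize (Hdel Hx Hy).
  pose proof (Rabs_triang_inv (g x y) (g 0 0)). lra.
Qed.

Lemma between_abs a c : Rmin 0 a <= c <= Rmax 0 a -> Rabs c <= Rabs a.
Proof.
  intros [H1 H2]. unfold Rmin, Rmax in *. destruct (Rle_dec 0 a).
  - rewrite (Rabs_right a) by lra. apply Rabs_le_between. lra.
  - rewrite (Rabs_left a) by lra. apply Rabs_le_between. lra.
Qed.

Lemma comp_bound n F i : harmonic_on_disc n F -> (i < n)%nat -> F 0 0 i = 0 ->
  exists C d, 0 < d /\ 0 <= C /\ forall x y, Rabs x < d -> Rabs y < d ->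
    F x y i * F x y i <= C * (x*x+y*y).
Proof.
  intros Hh Hi H0.
  assert (D0 : in_disc 0 0) by (unfold in_disc; lra).
  destruct (Hh 0 0 D0 i Hi) as [[_ [_ [_ [_ [_ [_ [_ [J1 [J2 _]]]]]]]]] _].
  destruct (bound_dpt _ J1) as [M1 [d1 [Hd1 [HM1 B1]]]].
  destruct (bound_dpt _ J2) as [M2 [d2 [Hd2 [HM2 B2]]]].
  set (d := Rmin d1 (Rmin d2 (1/2))).
  assert (Hdd : 0 < d /\ d <= d1 /\ d <= d2 /\ d <= 1/2).
  { unfold d. repeat split; try (repeat apply Rmin_pos; lra).
    apply Rmin_l. eapply Rle_trans; [apply Rmin_r| apply Rmin_l].
    eapply Rle_trans; [apply Rmin_r| apply Rmin_r]. }
  exists (2 * (M1 + M2) * (M1 + M2)), d. split; [tauto|]. split; [nra|].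
  intros x y Hx Hy.
  assert (Dsk : forall s t, Rabs s < d -> Rabs t < d -> in_disc s t).
  { intros s t Hs Ht. unfold in_disc. apply Rabs_def2 in Hs. apply Rabs_def2 in Ht. nra. }
  assert (E1 : Rabs (F x y i - F 0 y i) <= M1 * Rabs (x - 0)).
  { apply (lip1 (fun t => F t y i) (fun t => dx (Defs.comp F i) t y)).
    - intros c Hc. assert (Rabs c < d) by (pose proof (between_abs x c Hc); lra).
      destruct (Hh c y (Dsk c y H Hy) i Hi) as [[D _] _].
      apply (dpl_of_ex (fun t => Defs.comp F i t y) c D).
    - intros c Hc. assert (Rabs c < d) by (pose proof (between_abs x c Hc); lra).
      apply B1; lra. }
  assert (E2 : Rabs (F 0 y i - F 0 0 i) <= M2 * Rabs (y - 0)).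
  { apply (lip1 (fun t => F 0 t i) (fun t => dy (Defs.comp F i) 0 t)).
    - intros c Hc. assert (Rabs c < d) by (pose proof (between_abs y c Hc); lra).
      assert (Rabs 0 < d) by (rewrite Rabs_R0; lra).
      destruct (Hh 0 c (Dsk 0 c H1 H) i Hi) as [[_ [D _]] _].
      apply (dpl_of_ex (fun t => Defs.comp F i 0 t) c D).
    - intros c Hc. assert (Rabs c < d) by (pose proof (between_abs y c Hc); lra).
      apply B2; [rewrite Rabs_R0|]; lra. }
  rewrite H0, Rminus_0_r in E2. rewrite Rminus_0_r in E1, E2.
  assert (E : Rabs (F x y i) <= (M1 + M2) * (Rabs x + Rabs y)).
  { replace (F x y i) with ((F x y i - F 0 y i) + F 0 y i) by ring.
    eapply Rle_trans; [apply Rabs_triang|].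
    pose proof (Rabs_pos x); pose proof (Rabs_pos y). nra. }
  assert (Q : F x y i * F x y i = Rabs (F x y i) * Rabs (F x y i)).
  { rewrite <- Rabs_mult. rewrite Rabs_right; [auto| nra]. }
  assert (Qx : x * x = Rabs x * Rabs x) by (rewrite <- Rabs_mult; rewrite Rabs_right; [auto|nra]).
  assert (Qy : y * y = Rabs y * Rabs y) by (rewrite <- Rabs_mult; rewrite Rabs_right; [auto|nra]).
  rewrite Q, Qx, Qy.
  pose proof (Rabs_pos x); pose proof (Rabs_pos y); pose proof (Rabs_pos (F x y i)).
  assert (0 <= (M1+M2) * (Rabs x + Rabs y)) by nra.
  assert (Rabs (F x y i) * Rabs (F x y i) <= ((M1 + M2) * (Rabs x + Rabs y)) * ((M1 + M2) * (Rabs x + Rabs y))).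
  { apply Rmult_le_compat; auto. }
  assert (((M1 + M2) * (Rabs x + Rabs y)) * ((M1 + M2) * (Rabs x + Rabs y)) <=
          2 * (M1 + M2) * (M1 + M2) * (Rabs x * Rabs x + Rabs y * Rabs y)).
  { assert (0 <= ((M1+M2) * (Rabs x - Rabs y)) * ((M1+M2) * (Rabs x - Rabs y))) by exact (Rle_0_sqr _). nra. }
  lra.
Qed.

Lemma sq_bound k n F : (k <= n)%nat -> harmonic_on_disc n F ->
  (forall i, (i < n)%nat -> F 0 0 i = 0) ->
  exists C d, 0 < d /\ 0 <= C /\ forall x y, Rabs x < d -> Rabs y < d ->
    sqnorm k (F x y) <= C * (x*x+y*y).
Proof.
  intros Hk Hh H0. induction k.
  - exists 0, 1. split; [lra|]. split; [lra|]. intros; simpl. lra.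
  - destruct IHk as [C1 [d1 [Hd1 [HC1 B1]]]]; [lia|].
    destruct (comp_bound n F k Hh ltac:(lia) (H0 k ltac:(lia))) as [C2 [d2 [Hd2 [HC2 B2]]]].
    exists (C1 + C2), (Rmin d1 d2). split; [apply Rmin_pos; auto|]. split; [lra|].
    intros x y Hx Hy. simpl.
    pose proof (Rmin_l d1 d2); pose proof (Rmin_r d1 d2).
    specialize (B1 x y ltac:(lra) ltac:(lra)). specialize (B2 x y ltac:(lra) ltac:(lra)).
    lra.
Qed.


Lemma stepA n F a eta d1 d2 C x y :
  harmonic_on_disc n F -> conformal_on_disc n F -> maps_disc_into_ball n F ->
  0 < a -> 0 < eta -> 0 < d1 -> d1 <= x*x+y*y -> x*x+y*y <= d2 -> d2 < 1 ->
  (forall x y, x*x+y*y = d1 -> sqnorm n (F x y) <= C*d1) ->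
  hf a (y*y) x * sqnorm n (F x y) <=
  Rmax (exp (-a * ln d1) * (C*d1) + eta*d1) (exp (-a * ln d2) + eta*d2).
Proof.
  intros Hh Hc Hb Ha He Hd1 Hz1 Hz2 Hd2 Hin.
  destruct (EVTm.evt_annulus (Phi n F a eta) d1 d2 Hd1 ltac:(lra) ctsED_rho) as [cx [cy [[Hc1 Hc2] Hmax]]].
  { intros u v [H1 H2]. apply ctsED_Phi; auto. unfold in_disc; lra. lra. }
  assert (HPz : hf a (y*y) x * sqnorm n (F x y) <= Phi n F a eta cx cy).
  { assert (Hm := Hmax x y (conj Hz1 Hz2)). unfold Phi in Hm |- *.
    assert (0 <= eta * (x*x+y*y)) by nra. lra. }
  assert (Hhf : hf a (cy*cy) cx = exp (- a * ln (cx*cx+cy*cy))) by reflexivity.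
  assert (HS0 := sqnorm_ge0 n (F cx cy)).
  destruct (Rle_lt_or_eq_dec _ _ Hc1) as [Hi1|Hi1].
  - destruct (Rle_lt_or_eq_dec _ _ Hc2) as [Hi2|Hi2].
    +
      exfalso.
      set (rc := cx*cx+cy*cy) in *.
      set (d := Rmin 1 (Rmin ((rc-d1)/4) ((d2-rc)/4))).
      assert (Hd0 : 0 < d) by (unfold d; repeat apply Rmin_pos; lra).
      assert (Hdle1 : d <= 1) by apply Rmin_l.
      assert (Hdle2 : d <= (rc-d1)/4).
      { eapply Rle_trans; [apply Rmin_r| apply Rmin_l]. }
      assert (Hdle3 : d <= (d2-rc)/4).
      { eapply Rle_trans; [apply Rmin_r| apply Rmin_r]. }
      assert (Hdc : cx*cx+cy*cy < 1) by (unfold rc in *; lra).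
      apply (no_interior_max n F a eta cx cy d Hh Hc Ha He); auto.
      * unfold in_disc; unfold rc in *; lra.
      * intros s Hs. apply Hmax.
        pose proof (near_pt cx cy s d Hdc Hs Hdle1) as N.
        apply Rabs_le_between in N. unfold ann. fold rc in N. split; lra.
      * intros s Hs. apply Hmax.
        assert (Hdc' : cy*cy+cx*cx < 1) by lra.
        pose proof (near_pt cy cx s d Hdc' Hs Hdle1) as N.
        apply Rabs_le_between in N.
        replace (cy*cy+cx*cx) with rc in N by (unfold rc; ring).
        unfold ann. replace (cx*cx+s*s) with (s*s+cx*cx) by ring. split; lra.
    +
      assert (HPc : Phi n F a eta cx cy <= exp (-a * ln d2) + eta*d2).
      { unfold Phi. rewrite Hhf, Hi2.
        assert (sqnorm n (F cx cy) < 1) by (apply Hb; unfold in_disc; lra).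
        pose proof (exp_pos (-a * ln d2)). nra. }
      eapply Rle_trans; [exact HPz|]. eapply Rle_trans; [exact HPc| apply Rmax_r].
  -
    assert (HPc : Phi n F a eta cx cy <= exp (-a * ln d1) * (C*d1) + eta*d1).
    { unfold Phi. rewrite Hhf, <- Hi1.
      pose proof (Hin cx cy (eq_sym Hi1)).
      pose proof (exp_pos (-a * ln d1)). nra. }
    eapply Rle_trans; [exact HPz|]. eapply Rle_trans; [exact HPc| apply Rmax_l].
Qed.

Lemma abs_lt_of_sq x d : 0 < d -> x * x < d * d -> Rabs x < d.
Proof.
  intros Hd H. destruct (Rlt_dec (Rabs x) d) as [h|h]; auto. exfalso.
  assert (Rabs x * Rabs x = x * x) by (rewrite <- Rabs_mult; apply Rabs_right; nra).
  nra.
Qed.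

Lemma exp_mono x y : x <= y -> exp x <= exp y.
Proof. intros H; destruct (Rle_lt_or_eq_dec _ _ H) as [h|h]; [left; apply exp_increasing; auto| subst; lra]. Qed.

Lemma stepB1 n F a C d0 x y :
  harmonic_on_disc n F -> conformal_on_disc n F -> maps_disc_into_ball n F ->
  0 < a -> a < 1 -> 0 < d0 -> 0 <= C ->
  (forall x y, Rabs x < d0 -> Rabs y < d0 -> sqnorm n (F x y) <= C * (x*x+y*y)) ->
  0 < x*x+y*y -> x*x+y*y < 1 ->
  exp (- a * ln (x*x+y*y)) * sqnorm n (F x y) <= 1.
Proof.
  intros Hh Hc Hb Ha Ha1 Hd0 HC Hbd Hr0 Hr1.
  set (r := x*x+y*y) in *.
  apply le_epsilon. intros eps He.
  set (eta := eps/2).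
  set (d2 := Rmax r (1/(1+eps/2))).
  assert (Hd2a : r <= d2) by apply Rmax_l.
  assert (Hd2b : 1/(1+eps/2) <= d2) by apply Rmax_r.
  assert (Hd2c : d2 < 1).
  { unfold d2. apply Rmax_lub_lt; auto. apply Rmult_lt_reg_r with (1+eps/2); [lra|].
    unfold Rdiv. rewrite Rmult_1_l, Rinv_l by lra. lra. }
  set (e' := eps / (2 * (C + 1))).
  assert (He' : 0 < e') by (unfold e'; apply Rdiv_lt_0_compat; lra).
  set (d1 := Rmin (Rmin r (d0*d0/2)) (exp (ln e' / (1 - a)))).
  assert (Hd1a : d1 <= r) by (eapply Rle_trans; [apply Rmin_l| apply Rmin_l]).
  assert (Hd1b : d1 <= d0*d0/2) by (eapply Rle_trans; [apply Rmin_l| apply Rmin_r]).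
  assert (Hd1c : d1 <= exp (ln e' / (1 - a))) by apply Rmin_r.
  assert (Hd1p : 0 < d1).
  { unfold d1. repeat apply Rmin_pos; try nra. apply exp_pos. }
  assert (Hin : forall u v, u*u+v*v = d1 -> sqnorm n (F u v) <= C*d1).
  { intros u v Huv. rewrite <- Huv. apply Hbd; apply abs_lt_of_sq; auto; nra. }
  assert (HA := stepA n F a eta d1 d2 C x y Hh Hc Hb Ha ltac:(unfold eta; lra) Hd1p Hd1a Hd2a Hd2c Hin).
  change (hf a (y*y) x) with (exp (- a * ln r)) in HA.
  eapply Rle_trans; [exact HA|]. apply Rmax_lub.
  -
    assert (E1 : exp (- a * ln d1) * d1 = exp ((1 - a) * ln d1)).
    { rewrite <- (exp_ln d1) at 2 by auto. rewrite <- exp_plus. f_equal. ring. }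
    assert (E2 : exp ((1 - a) * ln d1) <= e').
    { rewrite <- (exp_ln e') by auto. apply exp_mono.
      assert (ln d1 <= ln e' / (1 - a)).
      { rewrite <- (ln_exp (ln e' / (1 - a))). apply ln_le; auto. }
      apply Rmult_le_compat_l with (r := 1 - a) in H; [|lra].
      replace ((1 - a) * (ln e' / (1 - a))) with (ln e') in H by (field; lra). lra. }
    assert (E3 : C * e' <= eps / 2).
    { unfold e'. replace (C * (eps / (2*(C+1)))) with ((eps/2) * (C/(C+1))) by (field; lra).
      assert (C/(C+1) <= 1).
      { apply Rmult_le_reg_r with (C+1); [lra|]. unfold Rdiv. rewrite Rmult_assoc, Rinv_l by lra. lra. }
      nra. }
    assert (eta * d1 <= eps/2) by (unfold eta; nra).
    replace (exp (- a * ln d1) * (C * d1)) with (C * (exp (- a * ln d1) * d1)) by ring.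
    rewrite E1. assert (C * exp ((1 - a) * ln d1) <= C * e') by (apply Rmult_le_compat_l; auto).
    lra.
  -
    assert (Hd2p : 0 < d2) by lra.
    assert (Hln : ln d2 < 0) by (rewrite <- ln_1; apply ln_increasing; lra).
    assert (E1 : exp (- a * ln d2) <= / d2).
    { rewrite <- (exp_ln (/ d2)) by (apply Rinv_0_lt_compat; lra). apply exp_mono.
      rewrite ln_Rinv by lra. nra. }
    assert (E2 : / d2 <= 1 + eps/2).
    { replace (1 + eps/2) with (/ (1/(1+eps/2))) by (field; lra).
      apply Rinv_le_contravar; auto. apply Rdiv_lt_0_compat; lra. }
    assert (eta * d2 <= eps/2) by (unfold eta; nra).
    lra.
Qed.

Lemma schwarz n F x y :
  conformal_minimal_immersion n F -> maps_disc_into_ball n F ->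
  (forall i, (i < n)%nat -> F 0 0 i = 0) ->
  0 < x*x+y*y -> x*x+y*y < 1 -> sqnorm n (F x y) <= x*x+y*y.
Proof.
  intros [Hh [_ Hc]] Hb H0 Hr0 Hr1.
  destruct (sq_bound n n F (le_n n) Hh H0) as [C [d0 [Hd0 [HC Hbd]]]].
  set (r := x*x+y*y) in *.
  assert (HS1 : sqnorm n (F x y) < 1) by (apply Hb; unfold in_disc; auto).
  assert (HB : forall a, 0 < a -> a < 1 -> sqnorm n (F x y) <= exp (a * ln r)).
  { intros a Ha Ha1.
    pose proof (stepB1 n F a C d0 x y Hh Hc Hb Ha Ha1 Hd0 HC Hbd Hr0 Hr1) as B.
    fold r in B.
    assert (E : exp (- a * ln r) * exp (a * ln r) = 1).
    { rewrite <- exp_plus. replace (- a * ln r + a * ln r) with 0 by ring. apply exp_0. }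
    pose proof (exp_pos (a * ln r)). pose proof (exp_pos (- a * ln r)).
    apply Rmult_le_compat_l with (r := exp (a * ln r)) in B; [|lra].
    nra. }
  destruct (Rle_dec (sqnorm n (F x y)) r) as [h|h]; auto. exfalso.
  assert (HS0 : 0 < sqnorm n (F x y)) by lra.
  set (S := sqnorm n (F x y)) in *.
  assert (HL : ln r < 0) by (rewrite <- ln_1; apply ln_increasing; lra).
  assert (HLS : ln r < ln S) by (apply ln_increasing; lra).
  assert (HLS1 : ln S < 0) by (rewrite <- ln_1; apply ln_increasing; lra).
  set (q := ln S / ln r).
  assert (Hq : 0 < q /\ q < 1).
  { unfold q. split.
    - replace (ln S / ln r) with ((- ln S) / (- ln r)) by (field; lra).
      apply Rdiv_lt_0_compat; lra.
    - apply Rmult_lt_reg_r with (- ln r); [lra|].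
      replace (ln S / ln r * - ln r) with (- ln S) by (field; lra). lra. }
  specialize (HB ((q+1)/2) ltac:(lra) ltac:(lra)).
  assert (exp ((q+1)/2 * ln r) < S).
  { rewrite <- (exp_ln S) by lra. apply exp_increasing.
    assert (q * ln r = ln S) by (unfold q; field; lra).
    nra. }
  lra.
Qed.


Lemma nrm_ext n u v : (forall i, (i < n)%nat -> u i = v i) -> nrm n u = nrm n v.
Proof. intros H; unfold nrm; f_equal; apply sqnorm_ext; auto. Qed.

Lemma sqnorm_scal n s u : sqnorm n (fun i => s * u i) = s * s * sqnorm n u.
Proof. induction n; simpl; [ring| rewrite IHn; ring]. Qed.

Lemma nrm_scal n s u : 0 <= s -> nrm n (fun i => s * u i) = s * nrm n u.
Proof.
  intros Hs; unfold nrm. rewrite sqnorm_scal, sqrt_mult_alt by nra.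
  rewrite sqrt_square; auto.
Qed.

Lemma nrm_opp n u : nrm n (fun i => - u i) = nrm n u.
Proof.
  unfold nrm; f_equal. rewrite (sqnorm_ext n _ (fun i => -1 * u i)) by (intros; ring).
  rewrite sqnorm_scal. ring.
Qed.

Lemma nrm_ge0 n u : 0 <= nrm n u.
Proof. apply sqrt_pos. Qed.

Theorem theorem1p3 (n : nat) (F : R -> R -> nat -> R) (x0 y0 : R) :
  (3 <= n)%nat ->
  conformal_minimal_immersion n F ->
  maps_disc_into_ball n F ->
  (forall i, (i < n)%nat -> F 0 0 i = 0) ->
  x0 * x0 + y0 * y0 = 1 ->
  extends_to n F x0 y0 ->
  sqnorm n (F x0 y0) = 1 ->
  forall a b : nat -> R, is_differential_at n F x0 y0 a b ->
  Rbar_le 1 (opnorm n a b).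
Proof.
  intros Hn Hcmi Hb H0 Hz0 _ HF1 a b Hdiff.
  set (w := fun i => x0 * a i + y0 * b i).
  assert (Hw : forall eps, 0 < eps -> eps < 1 -> 1 - eps <= nrm n w).
  { intros eps He He1.
    destruct (Hdiff eps He) as [delta [Hdel Hd]].
    set (s := Rmin (delta/2) (1/2)).
    assert (Hs : 0 < s /\ s <= delta/2 /\ s <= 1/2).
    { unfold s; repeat split; [apply Rmin_pos; lra| apply Rmin_l| apply Rmin_r]. }
    set (t := 1 - s).
    assert (Hrt : (t*x0)*(t*x0) + (t*y0)*(t*y0) = t*t) by (rewrite <- Rmult_1_r; rewrite <- Hz0; ring).
    assert (Hdom : in_dom x0 y0 (t*x0) (t*y0)) by (left; unfold in_disc; unfold t in *; nra).
    assert (Hdist : (t*x0 - x0)*(t*x0 - x0) + (t*y0 - y0)*(t*y0 - y0) = s*s).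
    { unfold t. replace (s*s) with (s*s*(x0*x0+y0*y0)) by (rewrite Hz0; ring). ring. }
    specialize (Hd (t*x0) (t*y0) Hdom ltac:(rewrite Hdist; nra)).
    rewrite Hdist, sqrt_square in Hd by lra.
    fold (nrm n (fun i => F (t*x0) (t*y0) i - F x0 y0 i - ((t*x0 - x0) * a i + (t*y0 - y0) * b i))) in Hd.
    set (E := fun i => F (t*x0) (t*y0) i - F x0 y0 i - ((t*x0 - x0) * a i + (t*y0 - y0) * b i)) in Hd.
    assert (HS := schwarz n F (t*x0) (t*y0) Hcmi Hb H0 ltac:(unfold t in *; nra) ltac:(unfold t in *; nra)).
    rewrite Hrt in HS.
    assert (HnF : nrm n (F (t*x0) (t*y0)) <= t).
    { unfold nrm. apply Rle_trans with (sqrt (t*t)); [apply sqrt_le_1_alt; auto| rewrite sqrt_square; unfold t in *; lra]. }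
    assert (Hnz : nrm n (F x0 y0) = 1) by (unfold nrm; rewrite HF1; apply sqrt_1).
    assert (T1 := nrm_triangle n (fun i => F x0 y0 i - s * w i) (fun i => s * w i)).
    cbv beta in T1.
    rewrite (nrm_ext n (fun i => F x0 y0 i - s * w i + s * w i) (F x0 y0)) in T1 by (intros; ring).
    rewrite nrm_scal in T1 by lra.
    assert (T2 := nrm_triangle n (F (t*x0) (t*y0)) (fun i => - E i)).
    cbv beta in T2.
    rewrite (nrm_ext n (fun i => F (t*x0) (t*y0) i + - E i) (fun i => F x0 y0 i - s * w i)) in T2.
    2: { intros i Hi. unfold E, w, t. ring. }
    rewrite nrm_opp in T2.
    assert (s * (1 - eps) <= s * nrm n w) by (unfold t in *; lra).
    apply Rmult_le_reg_l with s; lra. }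
  assert (Hw1 : 1 <= nrm n w).
  { destruct (Rle_dec 1 (nrm n w)) as [h|h]; auto. exfalso.
    pose proof (nrm_ge0 n w).
    specialize (Hw ((1 - nrm n w)/2) ltac:(lra) ltac:(lra)). lra. }
  unfold opnorm.
  destruct (Lub_Rbar_correct (fun r => exists u v : R, u * u + v * v = 1 /\
              r = sqrt (sqnorm n (fun i => u * a i + v * b i)))) as [Hub _].
  apply Rbar_le_trans with (nrm n w).
  - simpl; auto.
  - apply Hub. exists x0, y0. split; auto.
Qed.
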